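(* For every integer $N\ge 0$, let $T_{1\times 4}(7,N)$ be the number of tilings of a $7\times n$ rectangle, $n=4N/7$, by $N$ tiles of size $1\times 4$ (and $0$ if $4N/7\notin\mathbb{Z}$). Then, as formal power series, \[ \sum_{N\ge 0} T_{1\times 4}(7,N)\,z^N=\frac{(1-z^7)^3}{1-8z^7+6z^{14}-4z^{21}+z^{28}}. \]
   Context: A tiling of an $m\times n$ rectangle (width $m$, length $n$, made of $mn$ unit squares) by $a\times b$ tiles is a partition of the rectangle into non-overlapping axis-parallel $a\times b$ rectangles with integer corner coordinates, each placed in either of its two orientations. Tilings related by reflections or rotations of the rectangle are counted as distinct. The empty tiling counts once for $N=0$. *)

(* Defs.v *)
From mathcomp Require Import all_boot all_order all_algebra.
Set Implicit Arguments. Unset Strict Implicit. Unset Printing Implicit Defensive.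
Import GRing.Theory.

Definition rect (m n x y w h : nat) : {set 'I_m * 'I_n} :=
  [set c : 'I_m * 'I_n | (x <= c.1 < x + w) && (y <= c.2 < y + h)].

Definition is_tile (m n a b : nat) (S : {set 'I_m * 'I_n}) : bool :=
  [exists x : 'I_m.+1, exists y : 'I_n.+1,
     ((x + a <= m) && (y + b <= n) && (S == @rect m n x y a b)) ||
     ((x + b <= m) && (y + a <= n) && (S == @rect m n x y b a))].

Definition tiling (m n a b : nat) (P : {set {set 'I_m * 'I_n}}) : bool :=
  partition P [set: 'I_m * 'I_n] && [forall S in P, @is_tile m n a b S].

Definition ntilings (m n a b N : nat) : nat :=
  #|[set P : {set {set 'I_m * 'I_n}} | @tiling m n a b P && (#|P| == N)]|.

Definition T14_7 (N : nat) : nat :=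
  if 7 %| 4 * N then ntilings 7 (4 * N %/ 7) 1 4 N else 0.

(* Main.v *)
Require Import Defs.
From mathcomp Require Import all_boot all_order all_algebra zify ring.
Import GRing.Theory.
Local Open Scope ring_scope.

Definition minl (s : seq nat) : nat := foldr minn (nth 0%N s 0) s.
Definition normp (d : seq nat) : seq nat := map (fun x => x - minl d)%N d.
Definition hmove (d : seq nat) : seq nat := set_nth 0%N d (index 0%N d) 4.
Definition vok (d : seq nat) : bool :=
  let i0 := index 0%N d in
  [&& (i0 + 4 <= 7)%N, nth 0%N d (i0+1) == 0%N, nth 0%N d (i0+2) == 0%N
     & nth 0%N d (i0+3) == 0%N].
Definition vmove (d : seq nat) : seq nat :=
  let i0 := index 0%N d in
  mkseq (fun i => if (i0 <= i < i0 + 4)%N then 1%N else nth 0%N d i) 7.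

Fixpoint H (f m : nat) (d : seq nat) : nat :=
  if m == 0%N then 1%N else
  match f with
  | 0 => 0%N
  | f'.+1 =>
     ((if (4 <= m)%N then H f' (m - minl (hmove d)) (normp (hmove d)) else 0)
     + (if vok d then H f' (m - minl (vmove d)) (normp (vmove d)) else 0))%N
  end.


Definition validp (d : seq nat) := (size d == 7%N) && (0%N \in d).
Definition succs (d : seq nat) : seq (seq nat * nat) :=
  (normp (hmove d), minl (hmove d)) ::
  (if vok d then [:: (normp (vmove d), minl (vmove d))] else [::]).

Definition key := (seq nat * nat)%type.
Definition form := seq (key * int).
Definition coefk (f : form) (k : key) : int :=
  foldr (fun e acc => if e.1 == k then intZmod.addz e.2 acc else acc) (Posz 0) f.
Definition stepf (f : form) (k : key) : form :=
  if validp k.1 && (4 <= k.2)%N then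
    let a := coefk f k in
    [seq e <- f | e.1 != k] ++ [seq ((p.1, k.2 - p.2)%N, a) | p <- succs k.1]
  else f.
Definition target : form :=
  [:: ((nseq 7 0%N, 16%N), 1); ((nseq 7 0%N, 12%N), -8); ((nseq 7 0%N, 8%N), 6);
      ((nseq 7 0%N, 4%N), -4); ((nseq 7 0%N, 0%N), 1)].
Definition pats : seq (seq nat) := [::
[:: 0; 0; 0; 0; 0; 0; 0];
[:: 1; 1; 1; 0; 0; 0; 0];
[:: 1; 1; 0; 0; 0; 0; 1];
[:: 1; 0; 0; 0; 0; 1; 1];
[:: 0; 0; 0; 0; 1; 1; 1];
[:: 4; 0; 0; 0; 0; 0; 0];
[:: 0; 0; 1; 1; 1; 1; 0];
[:: 1; 1; 1; 1; 0; 0; 0];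
[:: 0; 1; 1; 1; 1; 0; 0];
[:: 0; 0; 0; 1; 1; 1; 1];
[:: 2; 2; 2; 0; 0; 0; 0];
[:: 0; 0; 0; 0; 2; 2; 2];
[:: 2; 2; 0; 0; 0; 0; 2];
[:: 2; 0; 0; 0; 0; 2; 2];
[:: 4; 0; 0; 0; 1; 1; 1];
[:: 1; 1; 1; 4; 0; 0; 0];
[:: 1; 1; 4; 0; 0; 0; 1];
[:: 1; 4; 0; 0; 0; 1; 1];
[:: 4; 0; 0; 1; 1; 1; 1];
[:: 0; 0; 0; 2; 2; 2; 2];
[:: 4; 1; 1; 1; 1; 0; 0];
[:: 0; 2; 2; 2; 2; 0; 0];
[:: 0; 0; 2; 2; 2; 2; 0];
[:: 4; 4; 0; 0; 0; 0; 0];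
[:: 4; 0; 1; 1; 1; 1; 0];
[:: 2; 2; 2; 2; 0; 0; 0];
[:: 1; 1; 1; 1; 4; 0; 0];
[:: 3; 3; 3; 0; 0; 0; 0];
[:: 3; 3; 0; 0; 0; 0; 3];
[:: 3; 0; 0; 0; 0; 3; 3];
[:: 0; 0; 0; 0; 3; 3; 3];
[:: 4; 0; 0; 0; 2; 2; 2];
[:: 2; 4; 0; 0; 0; 2; 2];
[:: 2; 2; 4; 0; 0; 0; 2];
[:: 2; 2; 2; 4; 0; 0; 0];
[:: 1; 1; 1; 4; 4; 0; 0];
[:: 1; 1; 4; 4; 0; 0; 1];
[:: 4; 4; 0; 0; 1; 1; 1];
[:: 1; 4; 4; 0; 0; 1; 1];
[:: 4; 4; 0; 1; 1; 1; 1];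
[:: 4; 4; 4; 0; 0; 0; 0];
[:: 0; 3; 3; 3; 3; 0; 0];
[:: 4; 1; 1; 1; 1; 4; 0];
[:: 0; 0; 0; 3; 3; 3; 3];
[:: 0; 0; 3; 3; 3; 3; 0];
[:: 4; 0; 2; 2; 2; 2; 0];
[:: 4; 0; 0; 2; 2; 2; 2];
[:: 4; 2; 2; 2; 2; 0; 0];
[:: 4; 4; 1; 1; 1; 1; 0];
[:: 3; 3; 3; 3; 0; 0; 0];
[:: 1; 1; 1; 1; 4; 4; 0];
[:: 2; 2; 2; 2; 4; 0; 0];
[:: 3; 3; 3; 4; 0; 0; 0];
[:: 3; 4; 0; 0; 0; 3; 3];
[:: 4; 0; 0; 0; 3; 3; 3];
[:: 3; 3; 4; 0; 0; 0; 3];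
[:: 2; 2; 2; 4; 4; 0; 0];
[:: 2; 4; 4; 0; 0; 2; 2];
[:: 4; 4; 0; 0; 2; 2; 2];
[:: 2; 2; 4; 4; 0; 0; 2];
[:: 4; 4; 4; 0; 1; 1; 1];
[:: 1; 1; 1; 4; 4; 4; 0];
[:: 1; 1; 4; 4; 4; 0; 1];
[:: 1; 4; 4; 4; 0; 1; 1];
[:: 3; 3; 3; 3; 4; 0; 0];
[:: 4; 0; 3; 3; 3; 3; 0];
[:: 4; 2; 2; 2; 2; 4; 0];
[:: 4; 4; 2; 2; 2; 2; 0];
[:: 4; 4; 4; 4; 0; 0; 0];
[:: 4; 3; 3; 3; 3; 0; 0];
[:: 4; 4; 0; 2; 2; 2; 2];
[:: 2; 2; 2; 2; 4; 4; 0];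
[:: 4; 0; 0; 3; 3; 3; 3];
[:: 3; 3; 4; 4; 0; 0; 3];
[:: 3; 4; 4; 0; 0; 3; 3];
[:: 4; 4; 0; 0; 3; 3; 3];
[:: 3; 3; 3; 4; 4; 0; 0];
[:: 4; 4; 4; 0; 2; 2; 2];
[:: 2; 2; 4; 4; 4; 0; 2];
[:: 2; 4; 4; 4; 0; 2; 2];
[:: 2; 2; 2; 4; 4; 4; 0];
[:: 4; 3; 3; 3; 3; 4; 0];
[:: 4; 4; 0; 3; 3; 3; 3];
[:: 4; 4; 3; 3; 3; 3; 0];
[:: 4; 4; 4; 4; 4; 0; 0];
[:: 3; 3; 3; 3; 4; 4; 0];
[:: 3; 3; 3; 4; 4; 4; 0];
[:: 3; 3; 4; 4; 4; 0; 3];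
[:: 3; 4; 4; 4; 0; 3; 3];
[:: 4; 4; 4; 0; 3; 3; 3];
[:: 4; 4; 4; 4; 4; 4; 0]].
Definition ops : seq key :=
  flatten [seq [seq (d, k) | d <- pats] | k <- rev (iota 4 13)].
Definition allzero (f : form) := all (fun e => coefk f e.1 == 0) f.
Lemma allzero_final : allzero (foldl stepf target ops).
Proof. vm_compute. reflexivity. Qed.

Section Engine.
Variable g : seq nat -> nat -> nat.
Hypothesis gstep : forall d m, validp d -> (4 <= m)%N ->
  g d m = (\sum_(p <- succs d) g p.1 (m - p.2))%N.
Hypothesis succs_le : forall d p, p \in succs d -> (p.2 <= 4)%N.
Variable M : nat.
Definition ev (f : form) : int :=
  foldr (fun e acc => e.2 * (g e.1.1 (M + e.1.2))%:R + acc) 0 f.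

Lemma ev_cat f1 f2 : ev (f1 ++ f2) = ev f1 + ev f2.
Proof. by elim: f1 => [|e f1 IH] /=; rewrite ?add0r // IH addrA. Qed.

Lemma ev_split f k : ev f = ev [seq e <- f | e.1 != k] + coefk f k * (g k.1 (M + k.2))%:R.
Proof.
elim: f => [|e f IH] /=; first by rewrite mul0r addr0.
case: eqP => [->|ne] /=.
  by rewrite IH mulrDl addrCA.
by rewrite IH addrA.
Qed.

Lemma ev_map (a : int) (k2 : nat) (s : seq (seq nat * nat)) :
  (forall p, p \in s -> (p.2 <= k2)%N) ->
  ev [seq ((p.1, k2 - p.2)%N, a) | p <- s] =
  \sum_(p <- s) a * (g p.1 (M + k2 - p.2))%:R.
Proof.
elim: s => [|p s IH] H /=; first by rewrite big_nil.
rewrite big_cons IH; last by move=> q qs; apply: H; rewrite inE qs orbT.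
congr (_ * _%:R + _); congr (g _ _).
by rewrite addnBA // H // mem_head.
Qed.

Lemma ev_step f k : ev (stepf f k) = ev f.
Proof.
rewrite /stepf; case: ifP => // /andP[vk k4].
rewrite ev_cat [RHS](ev_split _ k); congr (_ + _).
rewrite (gstep _ _ vk (leq_trans k4 (leq_addl _ _))) natr_sum big_distrr.
apply: ev_map => p /succs_le; lia.
Qed.

Lemma ev_steps f s : ev (foldl stepf f s) = ev f.
Proof. by elim: s f => [|k s IH] f //=; rewrite IH ev_step. Qed.

Lemma coefk_filter f k k' : k' != k ->
  coefk [seq e <- f | e.1 != k] k' = coefk f k'.
Proof.
move=> ne; elim: f => [|e f IH] //=.
case: (eqVneq e.1 k) => [ek|nek] /=.
  by rewrite IH; case: eqP => // ek'; rewrite -ek' ek eqxx in ne.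
by rewrite IH.
Qed.

Lemma ev_allzero f : allzero f -> ev f = 0.
Proof.
move Hn: (size f) => n; elim: n {-2}n (leqnn n) f Hn => [|n IH] m Hm f Hf.
  by move: Hf; rewrite (_ : m = 0%N) ?(size0nil) //; [case: f | lia].
case: f Hf => [//|e f] Hf Hz.
rewrite (ev_split _ e.1).
have := Hz; rewrite /allzero /= => /andP[/eqP He _].
rewrite He mul0r addr0 /= eqxx /=.
apply: (IH (size [seq x <- f | x.1 != e.1])).
  rewrite size_filter; apply: leq_trans (count_size _ _) _.
  simpl in Hf; move: Hm; rewrite -Hf ltnS; exact.
  by [].
apply/allP => x; rewrite mem_filter => /andP[nx xf].
rewrite coefk_filter //.
move: Hz; rewrite /allzero => /allP /(_ x); rewrite inE xf orbT => /(_ isT).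
by rewrite eq_sym in nx; rewrite /= (negbTE nx).
Qed.
End Engine.

Close Scope ring_scope.
Set Implicit Arguments. Unset Strict Implicit. Unset Printing Implicit Defensive.

Section Tilings.
Variable n : nat.
Notation cell := ('I_7 * 'I_n)%type.

Definition Sol (R : {set cell}) : {set {set {set cell}}} :=
  [set P : {set {set cell}} | partition P R && [forall S in P, @is_tile 7 n 1 4 S]].
Definition tcount (R : {set cell}) : nat := #|Sol R|.

Lemma tcount0 : tcount set0 = 1%N.
Proof.
rewrite /tcount (_ : Sol set0 = [set set0]) ?cards1 //.
apply/setP => P; rewrite !inE partition_set0.
case: eqP => [-> | //]; apply/forallP => S; by rewrite inE.
Qed.

Lemma mem_rect x y a b (c : cell) :
  (c \in rect 7 n x y a b) = (x <= c.1 < x + a) && (y <= c.2 < y + b).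
Proof. by rewrite inE. Qed.

Lemma tile_sub (R T : {set cell}) :
  @is_tile 7 n 1 4 T -> T \subset R -> (exists c, c \in T) ->
  #|[set P in Sol R | T \in P]| = tcount (R :\: T).
Proof.
move=> tT TR [c cT].
have T0 : T != set0 by apply/set0Pn; exists c.
rewrite -(@card_in_imset _ _ (fun P => P :\ T)); last first.
  move=> P Q; rewrite !inE => /andP[_ PT] /andP[_ QT] E.
  by rewrite -(setD1K PT) -(setD1K QT) E.
rewrite /tcount; apply: eq_card => Q; apply/imsetP/idP.
- move=> [P]; rewrite !inE => /andP[/andP[pP tP] PT] ->.
  rewrite partitionD1 //=; apply/forallP => S; apply/implyP.
  by rewrite !inE => /andP[_ SP]; move/forallP: tP => /(_ S); rewrite SP.
- rewrite inE => /andP[pQ tQ].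
  have TQ : T \notin Q.
    apply/negP => TQ; have := partitionS pQ TQ => /subsetP /(_ c cT).
    by rewrite !inE cT.
  exists (T |: Q); last by rewrite setU1K.
  rewrite !inE eqxx /= andbT.
  have -> : R = T :|: (R :\: T).
    apply/setP => x; rewrite !inE; case xT: (x \in T) => //=.
    by move/subsetP: TR => /(_ x xT) ->.
  rewrite partitionU1 //=; last first.
    by rewrite -setI_eq0; apply/eqP/setP => x; rewrite !inE; case: (x \in T); rewrite ?andbF.
  apply/forallP => S; rewrite !inE; apply/implyP => /orP[/eqP -> //|SQ].
  by move/forallP: tQ => /(_ S); rewrite SQ.
Qed.

Lemma tile_rect (x y a b : nat) : (x + a <= 7)%N -> (y + b <= n)%N ->
  ((a == 1%N) && (b == 4%N)) || ((a == 4%N) && (b == 1%N)) ->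
  @is_tile 7 n 1 4 (rect 7 n x y a b).
Proof.
move=> xa yb ab; apply/existsP; exists (inord x); apply/existsP; exists (inord y).
rewrite !inordK; [|lia|lia].
by case/orP: ab => /andP[/eqP ha /eqP hb]; subst a b; rewrite xa yb eqxx ?orbT.
Qed.

Lemma tile_shape (S : {set cell}) : @is_tile 7 n 1 4 S ->
  exists x y a b, [/\ (x + a <= 7)%N, (y + b <= n)%N,
    ((a == 1%N) && (b == 4%N)) || ((a == 4%N) && (b == 1%N)) & S = rect 7 n x y a b].
Proof.
case/existsP => x /existsP [y] /orP[/andP[/andP[h1 h2] /eqP ->]|/andP[/andP[h1 h2] /eqP ->]].
  by exists x, y, 1%N, 4%N; split.
by exists x, y, 4%N, 1%N; split.
Qed.

Lemma core (R : {set cell}) (c : cell) :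
  c \in R ->
  (forall c', c' \in R -> (c.2 < c'.2)%N || ((c.2 == c'.2 :> nat) && (c.1 <= c'.1)%N)) ->
  tcount R =
   ((if (c.2 + 4 <= n)%N && (rect 7 n c.1 c.2 1 4 \subset R)
     then tcount (R :\: rect 7 n c.1 c.2 1 4) else 0)
  + (if (c.1 + 4 <= 7)%N && (rect 7 n c.1 c.2 4 1 \subset R)
     then tcount (R :\: rect 7 n c.1 c.2 4 1) else 0))%N.
Proof.
move=> cR cmin.
set tH := rect 7 n c.1 c.2 1 4; set tV := rect 7 n c.1 c.2 4 1.
set A := [set P in Sol R | (c.2 + 4 <= n)%N && (tH \in P)].
set B := [set P in Sol R | (c.1 + 4 <= 7)%N && (tV \in P)].
have cH : c \in tH by rewrite mem_rect !leqnn; lia.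
have cV : c \in tV by rewrite mem_rect !leqnn; lia.
have SolAB : Sol R = A :|: B.
  apply/setP => P; rewrite !inE; apply/idP/idP; last first.
    by case/orP => /andP[-> _].
  move=> PS; rewrite PS /=; case/andP: PS => pP tP.
  have cc : c \in cover P by rewrite (cover_partition pP).
  have SP := pblock_mem cc; have cS : c \in pblock P c by rewrite mem_pblock.
  move/forallP: tP => /(_ (pblock P c)); rewrite SP /= => /tile_shape.
  move=> [x [y [a [b [xa yb ab Se]]]]].
  have hx : (x < 7)%N by move: ab => /orP[] /andP[/eqP ha /eqP hb]; lia.
  have hy : (y < n)%N by move: ab => /orP[] /andP[/eqP ha /eqP hb]; lia.
  pose cx : cell := (Ordinal hx, Ordinal hy).
  have cxS : cx \in pblock P c.
    rewrite Se mem_rect /= !leqnn /=.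
    by move: ab => /orP[] /andP[/eqP ha /eqP hb]; rewrite ha hb; lia.
  have cxR : cx \in R.
    by move/subsetP: (partitionS pP SP) => /(_ cx cxS).
  move: (cmin cx cxR) cS; rewrite Se mem_rect /= => hmin hc.
  have ex : x = c.1 by lia.
  have ey : y = c.2 by lia.
  move: Se; rewrite ex ey => Se.
  move: ab => /orP[] /andP[/eqP ha /eqP hb]; move: Se; rewrite ha hb => Se.
  - by apply/orP; left; rewrite /tH -Se SP andbT; move: yb; rewrite ey hb.
  - by apply/orP; right; rewrite /tV -Se SP andbT; move: xa; rewrite ex ha.
have AB0 : A :&: B = set0.
  apply/setP => P; rewrite !inE; apply/negP.
  move=> /andP[/andP[/andP[pP _] /andP[h1 HP]] /andP[_ /andP[h2 VP]]].
  have tiP := partition_trivIset pP.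
  have := def_pblock tiP HP cH; rewrite (def_pblock tiP VP cV) => E.
  have h3 : (c.2.+1 < n)%N by lia.
  pose c2 : cell := (c.1, Ordinal h3).
  have : c2 \in tH by rewrite mem_rect /= !leqnn /=; lia.
  by rewrite -E mem_rect /=; lia.
rewrite {1}/tcount SolAB cardsU AB0 cards0 subn0.
congr (_ + _)%N.
- case: ifP => [/andP[h1 sub]|hf].
  + rewrite -(tile_sub (T := tH)) //; last by exists c.
      apply: eq_card => P; rewrite !inE h1.
      by case: (partition P R).
    by apply: tile_rect => //; have := ltn_ord c.1; have := ltn_ord c.2; lia.
  + apply/eqP; rewrite cards_eq0; apply/eqP/setP => P; rewrite !inE.
    case: (boolP (c.2 + 4 <= n)%N) hf => h1 /=; last by rewrite andbF.
    move=> hf; apply/negP => /andP[/andP[pP _] HP].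
    by rewrite (partitionS pP HP) in hf.
- case: ifP => [/andP[h1 sub]|hf].
  + rewrite -(tile_sub (T := tV)) //; last by exists c.
      apply: eq_card => P; rewrite !inE h1.
      by case: (partition P R).
    by apply: tile_rect => //; have := ltn_ord c.1; have := ltn_ord c.2; lia.
  + apply/eqP; rewrite cards_eq0; apply/eqP/setP => P; rewrite !inE.
    case: (boolP (c.1 + 4 <= 7)%N) hf => h1 /=; last by rewrite andbF.
    move=> hf; apply/negP => /andP[/andP[pP _] HP].
    by rewrite (partitionS pP HP) in hf.
Qed.

End Tilings.

Set Implicit Arguments. Unset Strict Implicit. Unset Printing Implicit Defensive.

Lemma foldr_minn_le x s : (foldr minn x s <= x)%N /\ forall i, (i < size s)%N -> (foldr minn x s <= nth 0%N s i)%N.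
Proof.
elim: s => [|y s [IH1 IH2]] /=; first by split.
split; first by lia.
move=> [|i] /=; first by lia.
rewrite ltnS => /IH2; lia.
Qed.

Lemma minl_le s i : (i < size s)%N -> (minl s <= nth 0%N s i)%N.
Proof. by move=> h; case: (foldr_minn_le (nth 0%N s 0) s) => _ /(_ i h). Qed.

Lemma foldr_minn_mem x s : foldr minn x s \in x :: s.
Proof.
elim: s => [|y s IH] /=; first by rewrite inE.
rewrite /minn; case: ltnP => _; first by rewrite !inE eqxx orbT.
by move: IH; rewrite !inE => /orP[->|->]; rewrite ?orbT.
Qed.

Lemma minl_mem s : (0 < size s)%N -> minl s \in s.
Proof.
case: s => [//|y s] _; have := foldr_minn_mem y (y :: s).
by rewrite /minl /= inE => /orP[/eqP ->|]; rewrite ?inE ?eqxx.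
Qed.

Lemma size_normp s : size (normp s) = size s.
Proof. by rewrite size_map. Qed.

Lemma nth_normp s i : (i < size s)%N -> nth 0%N (normp s) i = (nth 0%N s i - minl s)%N.
Proof. by move=> h; rewrite (nth_map 0%N). Qed.

Lemma validp_normp s : size s = 7%N -> validp (normp s).
Proof.
move=> hs; rewrite /validp size_normp hs eqxx /=.
apply/mapP; exists (minl s); last by rewrite subnn.
by apply: minl_mem; rewrite hs.
Qed.

Lemma validp_index d : validp d -> (index 0%N d < 7)%N /\ nth 0%N d (index 0%N d) = 0%N.
Proof.
case/andP => /eqP hs h0; split; first by rewrite -hs index_mem.
by rewrite nth_index.
Qed.

Lemma size_hmove d : validp d -> size (hmove d) = 7%N.
Proof.
move=> vd; have [hi _] := validp_index vd; move: vd => /andP[/eqP hs _].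
rewrite size_set_nth hs; lia.
Qed.

Lemma nth_hmove d i : nth 0%N (hmove d) i = if i == index 0%N d then 4%N else nth 0%N d i.
Proof. by rewrite nth_set_nth. Qed.

Lemma size_vmove d : size (vmove d) = 7%N.
Proof. by rewrite size_mkseq. Qed.

Lemma nth_vmove d i : (i < 7)%N -> nth 0%N (vmove d) i =
  if (index 0%N d <= i < index 0%N d + 4)%N then 1%N else nth 0%N d i.
Proof. by move=> h; rewrite nth_mkseq. Qed.

Lemma vok_nth d i : validp d -> vok d -> (index 0%N d <= i < index 0%N d + 4)%N -> nth 0%N d i = 0%N.
Proof.
move=> vd; have [_ h0] := validp_index vd.
case/and4P => _ /eqP h1 /eqP h2 /eqP h3 /andP[hi1 hi2].
have : i = index 0%N d \/ i = (index 0%N d + 1)%N \/ i = (index 0%N d + 2)%N \/ i = (index 0%N d + 3)%N by lia.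
by case=> [->|[->|[->|->]]].
Qed.

Lemma succs_le d p : p \in succs d -> (p.2 <= 4)%N.
Proof.
rewrite /succs inE => /orP[/eqP -> /=|].
  case: (ltnP (index 0%N d) (size d)) => h.
    have : (index 0%N d < size (hmove d))%N by rewrite size_set_nth; lia.
    by move/minl_le; rewrite nth_hmove eqxx.
  have : (index 0%N d < size (hmove d))%N by rewrite size_set_nth; lia.
  by move/minl_le; rewrite nth_hmove eqxx.
case: ifP => // /and4P[h _ _ _]; rewrite inE => /eqP -> /=.
have : (index 0%N d < size (vmove d))%N by rewrite size_vmove; lia.
move/minl_le; rewrite nth_vmove; last by lia.
have -> : (index 0%N d < index 0%N d + 4)%N by lia.
rewrite leqnn /=; lia.
Qed.

Definition region (n m : nat) (d : seq nat) : {set 'I_7 * 'I_n} :=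
  [set c : 'I_7 * 'I_n | (n - (m - nth 0%N d c.1) <= c.2)%N].

Lemma region0 n d : region n 0 d = set0.
Proof. by apply/setP => c; rewrite !inE sub0n subn0 leqNgt ltn_ord. Qed.

Lemma regionH n m d : validp d -> (4 <= m)%N -> (m <= n)%N ->
  region n (m - minl (hmove d)) (normp (hmove d)) =
  region n m d :\: rect 7 n (index 0%N d) (n - m) 1 4.
Proof.
move=> vd h4 mn.
have [hi h0] := validp_index vd.
apply/setP => [[i j]]; rewrite !inE /=.
have hsh : size (hmove d) = 7%N := size_hmove vd.
rewrite nth_normp ?hsh ?ltn_ord // nth_hmove.
have := minl_le (s := hmove d) (i := index 0%N d); rewrite hsh nth_hmove eqxx => /(_ hi) mn1.
have := minl_le (s := hmove d) (i := i); rewrite hsh nth_hmove => /(_ (ltn_ord i)) mn2.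
have := ltn_ord j; have := ltn_ord i.
case: eqP => [ei|nei] in mn2 *.
  rewrite ei h0 => h1 h2; lia.
move=> h1 h2; lia.
Qed.

Lemma regionV n m d : validp d -> vok d -> (0 < m)%N -> (m <= n)%N ->
  region n (m - minl (vmove d)) (normp (vmove d)) =
  region n m d :\: rect 7 n (index 0%N d) (n - m) 4 1.
Proof.
move=> vd vk m0 mn.
have [hi h0] := validp_index vd.
have vn := vok_nth vd vk.
apply/setP => [[i j]]; rewrite !inE /=.
have hsv : size (vmove d) = 7%N := size_vmove d.
rewrite nth_normp ?hsv ?ltn_ord // nth_vmove ?ltn_ord //.
have := minl_le (s := vmove d) (i := index 0%N d); rewrite hsv nth_vmove // leqnn /=.
rewrite (_ : (index 0%N d < index 0%N d + 4)%N = true); last by lia.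
move=> /(_ hi) mn1.
have := minl_le (s := vmove d) (i := i); rewrite hsv nth_vmove ?ltn_ord // => /(_ isT) mn2.
have := ltn_ord j; have := ltn_ord i.
case: (boolP (index 0%N d <= i < index 0%N d + 4)%N) => hin in mn2 *.
  rewrite vn // => h1 h2; lia.
move=> h1 h2; lia.
Qed.

Lemma card_setD_lt (T : finType) (R S : {set T}) x : x \in R -> x \in S ->
  (#|R :\: S| < #|R|)%N.
Proof.
move=> xR xS; rewrite cardsD.
have h1 : (0 < #|R :&: S|)%N by apply/card_gt0P; exists x; rewrite inE xR xS.
have h2 : (0 < #|R|)%N by apply/card_gt0P; exists x.
lia.
Qed.

Lemma card_regionH n m d : validp d -> (4 <= m)%N -> (m <= n)%N ->
  (#|region n (m - minl (hmove d)) (normp (hmove d))| < #|region n m d|)%N.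
Proof.
move=> vd h4 mn; rewrite regionH //.
have [hi h0] := validp_index vd.
have hj : (n - m < n)%N by lia.
apply: (@card_setD_lt _ _ _ (Ordinal hi, Ordinal hj)).
  by rewrite inE /= h0; lia.
by rewrite mem_rect /= !leqnn /=; lia.
Qed.

Lemma card_regionV n m d : validp d -> vok d -> (0 < m)%N -> (m <= n)%N ->
  (#|region n (m - minl (vmove d)) (normp (vmove d))| < #|region n m d|)%N.
Proof.
move=> vd vk m0 mn; rewrite regionV //.
have [hi h0] := validp_index vd.
have hj : (n - m < n)%N by lia.
apply: (@card_setD_lt _ _ _ (Ordinal hi, Ordinal hj)).
  by rewrite inE /= h0; lia.
by rewrite mem_rect /= !leqnn /=; lia.
Qed.

Lemma region_step n m d : validp d -> (0 < m)%N -> (m <= n)%N ->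
  tcount (region n m d) =
  ((if (4 <= m)%N then tcount (region n (m - minl (hmove d)) (normp (hmove d))) else 0)
 + (if vok d then tcount (region n (m - minl (vmove d)) (normp (vmove d))) else 0))%N.
Proof.
move=> vd m0 mn.
have [hi h0] := validp_index vd.
have hs : size d = 7%N by case/andP: vd => /eqP.
have hj : (n - m < n)%N by lia.
pose c : 'I_7 * 'I_n := (Ordinal hi, Ordinal hj).
have cR : c \in region n m d by rewrite inE /= h0; lia.
rewrite (@core n (region n m d) c cR); last first.
  move=> [i j]; rewrite inE /= => hij.
  have := ltn_ord i; have := ltn_ord j.
  case: (ltnP (nat_of_ord i) (index 0%N d)) => hii.
    have : nth 0%N d i != 0%N.
      by have := @before_find _ 0%N (pred1 0%N) d i hii; rewrite /= => ->.
    move=> nz h1 h2; lia.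
  move=> h1 h2; lia.
rewrite /=.
congr (_ + _)%N.
- have E : ((n - m + 4 <= n)%N && (rect 7 n (index 0%N d) (n - m) 1 4 \subset region n m d)) = (4 <= m)%N.
    case: (leqP 4 m) => h4.
      rewrite (_ : (n - m + 4 <= n)%N = true); last by lia.
      apply/subsetP => [[i j]]; rewrite mem_rect inE /= => /andP[/andP[a1 a2] /andP[b1 b2]].
      have -> : nat_of_ord i = index 0%N d by lia.
      rewrite h0; lia.
    by rewrite (_ : (n - m + 4 <= n)%N = false) //; lia.
  rewrite E; case: ifP => // h4.
  congr (tcount _); apply/setP => [[i j]]; rewrite !inE /=.
  have hsh : size (hmove d) = 7%N := size_hmove vd.
  rewrite nth_normp ?hsh ?ltn_ord // nth_hmove.
  have := minl_le (s := hmove d) (i := index 0%N d); rewrite hsh nth_hmove eqxx => /(_ hi) mn1.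
  have := minl_le (s := hmove d) (i := i); rewrite hsh nth_hmove => /(_ (ltn_ord i)) mn2.
  have := ltn_ord j; have := ltn_ord i.
  case: eqP => [ei|nei] in mn2 *.
    rewrite ei h0 => h1 h2; lia.
  move=> h1 h2; lia.
- have E : ((index 0%N d + 4 <= 7)%N && (rect 7 n (index 0%N d) (n - m) 4 1 \subset region n m d)) = vok d.
    apply/idP/idP.
      move=> /andP[h4 /subsetP sub]; rewrite /vok h4 /=.
      have F : forall k, (k < 4)%N -> nth 0%N d (index 0%N d + k) == 0%N.
        move=> k hk.
        have hk7 : (index 0%N d + k < 7)%N by lia.
        have := sub (Ordinal hk7, Ordinal hj); rewrite mem_rect inE /=.
        move=> /(_ _) H; apply/eqP.
        have : (n - (m - nth 0%N d (index 0%N d + k)) <= n - m)%N by apply: H; lia.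
        lia.
      by rewrite !F.
    move=> vk; have := vok_nth vd vk => vn.
    move: (vk) => /and4P[-> _ _ _] /=.
    apply/subsetP => [[i j]]; rewrite mem_rect inE /= => /andP[/andP[a1 a2] /andP[b1 b2]].
    rewrite vn; [lia | by rewrite a1 a2].
  rewrite E; case: ifP => // vk.
  have vn := vok_nth vd vk.
  congr (tcount _); apply/setP => [[i j]]; rewrite !inE /=.
  have hsv : size (vmove d) = 7%N := size_vmove d.
  rewrite nth_normp ?hsv ?ltn_ord // nth_vmove ?ltn_ord //.
  have := minl_le (s := vmove d) (i := index 0%N d); rewrite hsv nth_vmove // leqnn /=.
  rewrite (_ : (index 0%N d < index 0%N d + 4)%N = true); last by lia.
  move=> /(_ hi) mn1.
  have := minl_le (s := vmove d) (i := i); rewrite hsv nth_vmove ?ltn_ord // => /(_ isT) mn2.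
  have := ltn_ord j; have := ltn_ord i.
  case: (boolP (index 0%N d <= i < index 0%N d + 4)%N) => hin in mn2 *.
    rewrite vn // => h1 h2; lia.
  move=> h1 h2; lia.
Qed.

Lemma region_gt0 n m d : validp d -> (0 < m)%N -> (m <= n)%N -> (0 < #|region n m d|)%N.
Proof.
move=> vd m0 mn; have [hi h0] := validp_index vd.
have hj : (n - m < n)%N by lia.
apply/card_gt0P; exists (Ordinal hi, Ordinal hj); rewrite inE /= h0; lia.
Qed.

Lemma Hcorrect f n m d : validp d -> (m <= n)%N -> (#|region n m d| <= f)%N ->
  H f m d = tcount (region n m d).
Proof.
elim: f m d => [|f IH] m d vd mn hc.
  case: (posnP m) => [->|m0]; first by rewrite region0 tcount0.
  by have := region_gt0 vd m0 mn; lia.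
case: (posnP m) => [->|m0]; first by rewrite region0 tcount0.
rewrite region_step // /=.
rewrite (_ : (m == 0%N) = false); last by lia.
congr (_ + _)%N.
- case: ifP => // h4; apply: IH.
  + by apply: validp_normp; rewrite size_hmove.
  + lia.
  + by have := card_regionH vd h4 mn; lia.
- case: ifP => // vk; apply: IH.
  + by apply: validp_normp; rewrite size_vmove.
  + lia.
  + by have := card_regionV vd vk m0 mn; lia.
Qed.

Lemma card_region n m d : (#|region n m d| <= 7 * n)%N.
Proof. by apply: leq_trans (max_card _) _; rewrite card_prod !card_ord. Qed.

Definition gH (d : seq nat) (m : nat) : nat := H (7 * m).+1 m d.

Lemma gH_tcount d m : validp d -> gH d m = tcount (region m m d).
Proof. move=> vd; apply: Hcorrect => //; apply: leq_trans (card_region _ _ _) _; lia. Qed.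

Lemma gH_eq d m f : validp d -> (7 * m <= f)%N -> H f m d = gH d m.
Proof.
move=> vd hf; rewrite gH_tcount //; apply: Hcorrect => //.
by apply: leq_trans (card_region _ _ _) _.
Qed.

Lemma gH_step d m : validp d -> (4 <= m)%N ->
  gH d m = (\sum_(p <- succs d) gH p.1 (m - p.2))%N.
Proof.
move=> vd h4.
rewrite {1}/gH /= (_ : (m == 0%N) = false); last by lia.
rewrite h4 /succs big_cons /=.
have svH : validp (normp (hmove d)) by apply: validp_normp; rewrite size_hmove.
congr (_ + _)%N.
  by apply: gH_eq => //; lia.
case: ifP => vk; last by rewrite big_nil.
have svV : validp (normp (vmove d)) by apply: validp_normp; rewrite size_vmove.
rewrite big_cons big_nil addn0 /=.
by apply: gH_eq => //; lia.
Qed.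

Set Implicit Arguments. Unset Strict Implicit. Unset Printing Implicit Defensive.

Lemma card_interval m x a : (x + a <= m)%N ->
  #|[set i : 'I_m | (x <= i < x + a)%N]| = a.
Proof.
move=> h.
have f_ok : forall k : 'I_a, (x + k < m)%N by move=> k; have := ltn_ord k; lia.
pose f (k : 'I_a) : 'I_m := Ordinal (f_ok k).
have -> : [set i : 'I_m | (x <= i < x + a)%N] = f @: setT.
  apply/setP => i; rewrite inE; apply/idP/imsetP.
    move=> /andP[h1 h2].
    have hk : (i - x < a)%N by lia.
    exists (Ordinal hk); first by rewrite inE.
    by apply: val_inj => /=; lia.
  move=> [k _ ->] /=; have := ltn_ord k; lia.
rewrite card_imset ?cardsT ?card_ord //.
by move=> k1 k2 [] E; apply: val_inj => /=; lia.
Qed.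

Lemma card_rect n x y a b : (x + a <= 7)%N -> (y + b <= n)%N ->
  #|rect 7 n x y a b| = (a * b)%N.
Proof.
move=> ha hb.
have -> : rect 7 n x y a b =
  setX [set i : 'I_7 | (x <= i < x + a)%N] [set j : 'I_n | (y <= j < y + b)%N].
  by apply/setP => [[i j]]; rewrite !inE.
by rewrite cardsX !card_interval.
Qed.

Lemma card_tile n (S : {set 'I_7 * 'I_n}) : @is_tile 7 n 1 4 S -> #|S| = 4%N.
Proof.
move/tile_shape => [x [y [a [b [xa yb ab ->]]]]].
rewrite card_rect //.
by case/orP: ab => /andP[/eqP -> /eqP ->].
Qed.

Lemma region_full n : region n n (nseq 7 0%N) = setT.
Proof. by apply/setP => c; rewrite !inE nth_nseq; case: ifP; rewrite subn0 subnn. Qed.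

Lemma ntilings_eq k :
  ntilings 7 (4 * k) 1 4 (7 * k) = gH (nseq 7 0%N) (4 * k).
Proof.
rewrite gH_tcount; last by [].
rewrite region_full /ntilings /tcount /Sol.
apply: eq_card => P; rewrite !inE /tiling.
case: (boolP (partition P [set: 'I_7 * 'I_(4 * k)])) => //= pP.
case: (boolP [forall S in P, @is_tile 7 (4 * k) 1 4 S]) => //= tP.
apply/eqP.
have h4 : {in P, forall S : {set 'I_7 * 'I_(4 * k)}, #|S| = 4%N}.
  by move=> S SP; apply: card_tile; move/forallP: tP => /(_ S); rewrite SP.
have := card_uniform_partition h4 pP; rewrite cardsT card_prod !card_ord; move: #|P| => p; lia.
Qed.

Set Implicit Arguments. Unset Strict Implicit. Unset Printing Implicit Defensive.
Local Open Scope ring_scope.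
Lemma polyE (q : {poly int}) :
  q * (1 - 8 * 'X^7 + 6 * 'X^14 - 4 * 'X^21 + 'X^28) =
  q - (q * 'X^7) *+ 8 + (q * 'X^14) *+ 6 - (q * 'X^21) *+ 4 + q * 'X^28.
Proof. ring. Qed.
Lemma polyE2 : (1 - 'X^7) ^+ 3 = 1 - 'X^7 *+ 3 + 'X^14 *+ 3 - 'X^21 :> {poly int}.
Proof. ring. Qed.

Definition t (k : nat) : nat := gH (nseq 7 0%N) k.

Lemma t_rec M : ((t (M + 16))%:R - 8 * (t (M + 12))%:R + 6 * (t (M + 8))%:R
   - 4 * (t (M + 4))%:R + (t M)%:R : int) = 0.
Proof.
have := @ev_steps gH gH_step succs_le M target ops.
rewrite ev_allzero; last exact: allzero_final.
rewrite /ev /= /t addn0 => E.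
rewrite [LHS](_ : _ = ((1 * (gH (nseq 7 0%N) (M + 16))%:R +
      (-8 * (gH (nseq 7 0%N) (M + 12))%:R +
       (6 * (gH (nseq 7 0%N) (M + 8))%:R +
        (-4 * (gH (nseq 7 0%N) (M + 4))%:R + (1 * (gH (nseq 7 0%N) M)%:R + 0))))))).
  by rewrite -E.
ring.
Qed.

Lemma T14_7_eq i : T14_7 i = if (7 %| i)%N then t (4 * (i %/ 7)) else 0%N.
Proof.
rewrite /T14_7 Gauss_dvdr //.
case: ifP => // /dvdnP [q ->].
rewrite [(q * 7)%N]mulnC mulKn // (_ : (4 * (7 * q) = 7 * (4 * q))%N); last by ring.
by rewrite mulKn // ntilings_eq.
Qed.

Lemma coefE (q : {poly int}) i :
  (q * (1 - 8 * 'X^7 + 6 * 'X^14 - 4 * 'X^21 + 'X^28))`_i =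
  q`_i - (q * 'X^7)`_i *+ 8 + (q * 'X^14)`_i *+ 6 - (q * 'X^21)`_i *+ 4 + (q * 'X^28)`_i.
Proof. by rewrite polyE coefD coefB coefD coefB !coefMn. Qed.

Lemma coefE2 i : ((1 - 'X^7) ^+ 3 : {poly int})`_i =
  (i == 0%N)%:R - (i == 7%N)%:R *+ 3 + (i == 14%N)%:R *+ 3 - (i == 21%N)%:R.
Proof. by rewrite polyE2 coefB coefD coefB !coefMn coef1 !coefXn. Qed.

Theorem mainTheorem6 : forall N : nat,
  ((\poly_(i < N.+1) ((T14_7 i)%:Z)) *
     (1 - 8 * 'X^7 + 6 * 'X^14 - 4 * 'X^21 + 'X^28 : {poly int}))`_N
  = (((1 - 'X^7) ^+ 3 : {poly int}))`_N.
Proof.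
move=> N.
rewrite coefE coefE2 !coefMXn !coef_poly.
rewrite !T14_7_eq.
case: (ltnP N 28) => hN.
  move: N hN; do 28! (case; first by move=> _; apply/eqP; vm_compute; reflexivity).
  by [].
have [M ->] : exists M, N = (M + 28)%N by exists (N - 28)%N; lia.
rewrite (_ : (M + 28 < 7)%N = false); last by lia.
rewrite (_ : (M + 28 < 14)%N = false); last by lia.
rewrite (_ : (M + 28 < 21)%N = false); last by lia.
rewrite (_ : (M + 28 - 7 = M + 21)%N); last by lia.
rewrite (_ : (M + 28 - 14 = M + 14)%N); last by lia.
rewrite (_ : (M + 28 - 21 = M + 7)%N); last by lia.
rewrite (_ : (M + 28 - 28 = M)%N); last by lia.
rewrite (_ : (M + 28 < (M + 28).+1)%N = true); last by lia.
rewrite (_ : (M + 21 < (M + 28).+1)%N = true); last by lia.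
rewrite (_ : (M + 14 < (M + 28).+1)%N = true); last by lia.
rewrite (_ : (M + 7 < (M + 28).+1)%N = true); last by lia.
rewrite (_ : (M < (M + 28).+1)%N = true); last by lia.
rewrite (_ : (M + 28 == 0)%N = false); last by lia.
rewrite (_ : (M + 28 == 7)%N = false); last by lia.
rewrite (_ : (M + 28 == 14)%N = false); last by lia.
rewrite (_ : (M + 28 == 21)%N = false); last by lia.
rewrite /= mul0rn subr0 addr0 subr0.
case: (boolP (7 %| M)%N) => hM.
  have [q eq] := dvdnP hM; subst M.
  rewrite (_ : (7 %| q * 7 + 28)%N = true); last by lia.
  rewrite (_ : (7 %| q * 7 + 21)%N = true); last by lia.
  rewrite (_ : (7 %| q * 7 + 14)%N = true); last by lia.
  rewrite (_ : (7 %| q * 7 + 7)%N = true); last by lia.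
  rewrite (_ : (4 * ((q * 7 + 28) %/ 7) = 4 * q + 16)%N); last by lia.
  rewrite (_ : (4 * ((q * 7 + 21) %/ 7) = 4 * q + 12)%N); last by lia.
  rewrite (_ : (4 * ((q * 7 + 14) %/ 7) = 4 * q + 8)%N); last by lia.
  rewrite (_ : (4 * ((q * 7 + 7) %/ 7) = 4 * q + 4)%N); last by lia.
  rewrite (_ : (4 * ((q * 7) %/ 7) = 4 * q)%N); last by lia.
  have := t_rec (4 * q); rewrite !natz => E.
  rewrite -[RHS]E; ring.
rewrite (_ : (7 %| M + 28)%N = false); last by lia.
rewrite (_ : (7 %| M + 21)%N = false); last by lia.
rewrite (_ : (7 %| M + 14)%N = false); last by lia.
rewrite (_ : (7 %| M + 7)%N = false); last by lia.
by rewrite !mul0rn !(subr0, addr0).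
Qed.
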